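(* For any real $x>1/4$ we have $$\sum_{k=0}^\infty\frac{2(4x+1)k-2x+1}{x^{2k}\binom{4k}{2k}}=\frac{8x^2}{(4x-1)^2}\left(\frac3{\sqrt{4x-1}}\operatorname{arccot}\sqrt{4x-1}-4x+4\right)$$ and $$\sum_{k=0}^\infty\frac{2(4x-1)k-2x-1}{x^{2k}\binom{4k}{2k}}=\frac{8x^2}{(4x+1)^2}\left(\frac{3R(4x+1)}{4x+1}-4x-4\right).$$ Consequently, \begin{align*} \sum_{k=0}^\infty\frac{10k-1}{\binom{4k}{2k}}&=\frac{4\sqrt3}{27}\pi,\\ \sum_{k=0}^\infty\frac{k4^k}{\binom{4k}{2k}}&=\frac{3\pi+8}{12},\\ \sum_{k=0}^\infty\frac{(14k+1)9^k}{\binom{4k}{2k}}&=24\pi\sqrt3+64,\\ \sum_{k=0}^\infty\frac{(22k-1)9^k}{4^k\binom{4k}{2k}}&=\frac{32}{25}\left(4+\frac{27}{\sqrt{15}}\arctan\sqrt{\frac35}\right),\\ \sum_{k=0}^\infty\frac{14k-5}{4^k\binom{4k}{2k}}&=\frac{16}{81}(\log2-24). \end{align*}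
   Context: For real $x$ with $x>1$ or $x<0$, define $R(x)=\sqrt x\,\operatorname{arctanh}\frac1{\sqrt x}$, i.e. $R(x)=\frac{\sqrt x}2\log\frac{\sqrt x+1}{\sqrt x-1}$ if $x>1$ and $R(x)=\sqrt{|x|}\arctan\frac1{\sqrt{|x|}}$ if $x<0$. For $y>0$, $\operatorname{arccot} y=\arctan(1/y)\in(0,\pi/2)$. *)

(* Defs.v *)
From Stdlib Require Import Reals.
From Coquelicot Require Import Coquelicot.
Open Scope R_scope.

Definition binomR (n k : nat) : R := Binomial.C n k.

Definition arccot (y : R) : R := atan (1 / y).

(* R(x) = sqrt x * arctanh (1/sqrt x), for x > 1 or x < 0
   (value for 0 <= x <= 1 is irrelevant / arbitrary) *)
Definition Rfun (x : R) : R :=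
  if Rlt_dec 1 x then sqrt x / 2 * ln ((sqrt x + 1) / (sqrt x - 1))
  else sqrt (- x) * atan (1 / sqrt (- x)).

(* Main.v *)
Require Import Defs.
From Stdlib Require Import Reals.
From Coquelicot Require Import Coquelicot.
From Stdlib Require Import Lra Lia Factorial.
Open Scope R_scope.


Lemma binom_rec (n : nat) :
  Binomial.C (2 * S n) (S n) * INR (S n) = 2 * (2 * INR n + 1) * Binomial.C (2 * n) n.
Proof.
  unfold Binomial.C.
  replace (2 * S n - S n)%nat with (S n) by lia.
  replace (2 * n - n)%nat with n by lia.
  replace (2 * S n)%nat with (S (S (2 * n))) by lia.
  assert (Hf : INR (fact n) <> 0) by (apply not_0_INR, fact_neq_0).
  set (m := (2 * n)%nat).
  change (fact (S (S m))) with (S (S m) * (S m * fact m))%nat.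
  change (fact (S n)) with (S n * fact n)%nat.
  rewrite !mult_INR. assert (Hm : INR m = 2 * INR n) by (unfold m; rewrite mult_INR; simpl; ring).
  rewrite !S_INR, Hm.
  assert (0 <= INR n) by apply pos_INR.
  field. lra.
Qed.

Lemma cont_of_der (f : R -> R) x : ex_derive f x -> continuous f x.
Proof. intros H. exact (@ex_derive_continuous R_AbsRing R_NormedModule f x H). Qed.

Lemma RI_scal (f : R -> R) a b k I : is_RInt f a b I -> is_RInt (fun x => k * f x) a b (k * I).
Proof. intros H. exact (@is_RInt_scal R_NormedModule f a b k I H). Qed.
Lemma RI_plus (f g : R -> R) a b I J : is_RInt f a b I -> is_RInt g a b J ->
  is_RInt (fun x => f x + g x) a b (I + J).
Proof. intros H1 H2. exact (@is_RInt_plus R_NormedModule f g a b I J H1 H2). Qed.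
Lemma RI_minus (f g : R -> R) a b I J : is_RInt f a b I -> is_RInt g a b J ->
  is_RInt (fun x => f x - g x) a b (I - J).
Proof. intros H1 H2. exact (@is_RInt_minus R_NormedModule f g a b I J H1 H2). Qed.
Lemma RI_ext (f g : R -> R) a b I : (forall x, Rmin a b < x < Rmax a b -> f x = g x) -> is_RInt f a b I -> is_RInt g a b I.
Proof. intros H1 H2. exact (@is_RInt_ext R_NormedModule f g a b I H1 H2). Qed.
Lemma RI_val (f : R -> R) a b (I J : R) : I = J -> is_RInt f a b I -> is_RInt f a b J.
Proof. intros ->; auto. Qed.

Definition Wal (n : nat) : R := 4 ^ n / ((2 * INR n + 1) * Binomial.C (2 * n) n).

Lemma C_pos n k : (k <= n)%nat -> 0 < Binomial.C n k.
Proof.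
  intros H. unfold Binomial.C. apply Rdiv_lt_0_compat.
  apply lt_0_INR, lt_O_fact.
  apply Rmult_lt_0_compat; apply lt_0_INR, lt_O_fact.
Qed.

Lemma Wal_S n : Wal (S n) = (2 * INR n + 2) / (2 * INR n + 3) * Wal n.
Proof.
  unfold Wal.
  assert (H := binom_rec n).
  assert (Hc : 0 < Binomial.C (2 * n) n) by (apply C_pos; lia).
  assert (Hc' : 0 < Binomial.C (2 * S n) (S n)) by (apply C_pos; lia).
  rewrite S_INR in *.
  assert (0 <= INR n) by apply pos_INR.
  assert (H1 : Binomial.C (2 * S n) (S n) = 2 * (2 * INR n + 1) * Binomial.C (2 * n) n / (INR n + 1)).
  { rewrite <- H. field. lra. }
  rewrite H1. simpl pow. field. repeat split; lra.
Qed.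

Lemma wallis n : is_RInt (fun u => (1 - u ^ 2) ^ n) 0 1 (Wal n).
Proof.
  induction n as [|n IH].
  - replace (Wal 0) with (scal (1 - 0) (1:R)).
    + exact (is_RInt_const 0 1 (1:R)).
    + unfold Wal, Binomial.C, scal; simpl. unfold mult; simpl. field.
  - assert (Hd : is_RInt (fun u => (2 * INR n + 3) * (1 - u ^ 2) ^ (S n) - (2 * INR n + 2) * (1 - u ^ 2) ^ n) 0 1
               (1 * (1 - 1 ^ 2) ^ (S n) - 0 * (1 - 0 ^ 2) ^ (S n))).
    { apply (is_RInt_derive (fun u => u * (1 - u ^ 2) ^ (S n))).
      - intros x _. auto_derive; [easy|].
        replace (match n with 0%nat => 1 | S _ => INR n + 1 end) with (INR n + 1) by (destruct n; simpl; ring).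
        simpl pow. unfold Rminus. ring.
      - intros x _. apply cont_of_der. auto_derive. easy. }
    assert (Hn : 0 <= INR n) by apply pos_INR.
    apply (RI_ext (fun u => / (2 * INR n + 3) * (((2 * INR n + 3) * (1 - u ^ 2) ^ (S n) - (2 * INR n + 2) * (1 - u ^ 2) ^ n) + ((2 * INR n + 2) * ((1 - u ^ 2) ^ n))))).
    { intros u _. field. lra. }
    eapply RI_val.
    2:{ apply RI_scal. apply RI_plus. exact Hd. apply RI_scal. exact IH. }
    rewrite Wal_S. simpl pow. field. lra.
Qed.


Lemma lim_inv_S : is_lim_seq (fun n => / (INR n + 1)) 0.
Proof.
  assert (H : is_lim_seq (fun n => INR n + 1) p_infty).
  { apply (is_lim_seq_ext (fun n => INR (S n))). intros; apply S_INR.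
    apply -> (is_lim_seq_incr_1 INR). apply is_lim_seq_INR. }
  apply (is_lim_seq_inv _ _ H). discriminate.
Qed.

Lemma ex_series_sq (r : R) : 0 < r < 1 -> ex_series (fun n => (INR n + 1) ^ 2 * r ^ n).
Proof.
  intros Hr.
  apply ex_series_Rabs.
  apply (ex_series_DAlembert _ r). lra.
  - intros n. apply Rgt_not_eq. apply Rmult_lt_0_compat.
    assert (0 <= INR n) by apply pos_INR. nra. apply pow_lt; lra.
  - apply (is_lim_seq_ext (fun n => r * ((1 + / (INR n + 1)) * (1 + / (INR n + 1))))).
    + intros n. rewrite S_INR. assert (0 <= INR n) by apply pos_INR.
      rewrite Rabs_right.
      * simpl pow. field. split; [apply Rgt_not_eq, pow_lt; lra | lra].
      * apply Rle_ge. apply Rlt_le. apply Rdiv_lt_0_compat; apply Rmult_lt_0_compat; try apply pow_lt; lra.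
    + replace (Finite r) with (Rbar_mult r ((1 + 0) * (1 + 0))) by (simpl; f_equal; ring).
      apply is_lim_seq_scal_l.
      assert (H1 : is_lim_seq (fun n => 1 + / (INR n + 1)) (1 + 0)).
      { apply is_lim_seq_plus'. apply is_lim_seq_const. apply lim_inv_S. }
      apply is_lim_seq_mult'; exact H1.
Qed.

Lemma IS_plus (a b : nat -> R) la lb : is_series a la -> is_series b lb -> is_series (fun n => a n + b n) (la + lb).
Proof. intros H1 H2. exact (@is_series_plus R_AbsRing R_NormedModule a b la lb H1 H2). Qed.
Lemma IS_scal (a : nat -> R) c la : is_series a la -> is_series (fun n => c * a n) (c * la).
Proof. intros H1. exact (@is_series_scal R_AbsRing R_NormedModule c a la H1). Qed.
Lemma IS_ext (a b : nat -> R) la : (forall n, a n = b n) -> is_series a la -> is_series b la.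
Proof. intros H1 H2. exact (@is_series_ext R_AbsRing R_NormedModule a b la H1 H2). Qed.
Lemma IS_val (a : nat -> R) (la lb : R) : la = lb -> is_series a la -> is_series a lb.
Proof. intros ->; auto. Qed.
Lemma IS_shift (a : nat -> R) (l : R) : a 0%nat = 0 -> is_series a l -> is_series (fun n => a (S n)) l.
Proof. intros H0 H. apply is_series_incr_1.
  change (is_series a (l + a 0%nat)). rewrite H0, Rplus_0_r. exact H. Qed.

Lemma ex_series_dom (v : R) (g : nat -> R) : 0 <= v < 1 ->
  (forall n, Rabs (g n) <= (INR n + 1) ^ 2 * v ^ n) -> ex_series g.
Proof.
  intros Hv Hg. set (r := (1 + v) / 2).
  apply (ex_series_le g (fun n => (INR n + 1) ^ 2 * r ^ n)).
  - intros n. eapply Rle_trans. apply Hg. apply Rmult_le_compat_l.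
    apply pow_le. assert (0 <= INR n) by apply pos_INR. lra.
    apply pow_incr. unfold r; lra.
  - apply ex_series_sq. unfold r; lra.
Qed.

Lemma is_series_k0 (v : R) : 0 <= v < 1 -> is_series (fun n => v ^ n) (/ (1 - v)).
Proof. intros Hv. apply is_series_geom. rewrite Rabs_right; lra. Qed.

Lemma is_series_k1 (v : R) : 0 <= v < 1 -> is_series (fun n => INR n * v ^ n) (v / (1 - v) ^ 2).
Proof.
  intros Hv.
  assert (Hex : ex_series (fun n => INR n * v ^ n)).
  { apply (ex_series_dom v). exact Hv. intros n.
    assert (0 <= INR n) by apply pos_INR. assert (0 <= v ^ n) by (apply pow_le; lra).
    rewrite Rabs_right by (apply Rle_ge, Rmult_le_pos; lra).
    apply Rmult_le_compat_r. lra. nra. }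
  set (S0 := Series (fun n => INR n * v ^ n)).
  assert (H1 : is_series (fun n => INR n * v ^ n) S0) by (apply Series_correct, Hex).
  assert (H2 := IS_shift (fun n => INR n * v ^ n) S0 ltac:(simpl; ring) H1).
  assert (H3 : is_series (fun n => v * (INR n * v ^ n) + v * v ^ n) (v * S0 + v * / (1 - v))).
  { apply IS_plus; apply IS_scal. exact H1. apply is_series_k0, Hv. }
  assert (H4 : is_series (fun n => v * (INR n * v ^ n) + v * v ^ n) S0).
  { refine (IS_ext _ _ _ _ H2). intros n. rewrite S_INR. simpl. ring. }
  assert (E : S0 = v * S0 + v * / (1 - v)).
  { assert (E1 := is_series_unique _ _ H3). assert (E2 := is_series_unique _ _ H4). rewrite E2 in E1. exact E1. }
  replace (v / (1 - v) ^ 2) with S0. exact H1.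
  apply (Rmult_eq_reg_r (1 - v)); [|lra].
  replace (S0 * (1 - v)) with (v * / (1 - v)) by lra. field. lra.
Qed.

Lemma is_series_k2 (v : R) : 0 <= v < 1 -> is_series (fun n => INR n ^ 2 * v ^ n) (v * (1 + v) / (1 - v) ^ 3).
Proof.
  intros Hv.
  assert (Hex : ex_series (fun n => INR n ^ 2 * v ^ n)).
  { apply (ex_series_dom v). exact Hv. intros n.
    assert (0 <= INR n) by apply pos_INR. assert (0 <= v ^ n) by (apply pow_le; lra).
    rewrite Rabs_right by (apply Rle_ge, Rmult_le_pos; [apply pow_le|]; lra).
    apply Rmult_le_compat_r. lra. simpl. nra. }
  set (S0 := Series (fun n => INR n ^ 2 * v ^ n)).
  assert (H1 : is_series (fun n => INR n ^ 2 * v ^ n) S0) by (apply Series_correct, Hex).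
  assert (H2 := IS_shift (fun n => INR n ^ 2 * v ^ n) S0 ltac:(simpl; ring) H1).
  assert (H3 : is_series (fun n => v * (INR n ^ 2 * v ^ n) + ((2 * v) * (INR n * v ^ n) + v * v ^ n))
     (v * S0 + ((2 * v) * (v / (1 - v) ^ 2) + v * / (1 - v)))).
  { apply IS_plus; [apply IS_scal; exact H1|]. apply IS_plus; apply IS_scal.
    apply is_series_k1, Hv. apply is_series_k0, Hv. }
  assert (H4 : is_series (fun n => v * (INR n ^ 2 * v ^ n) + ((2 * v) * (INR n * v ^ n) + v * v ^ n)) S0).
  { refine (IS_ext _ _ _ _ H2). intros n. rewrite S_INR. simpl. ring. }
  assert (E : S0 = v * S0 + ((2 * v) * (v / (1 - v) ^ 2) + v * / (1 - v))).
  { assert (E1 := is_series_unique _ _ H3). assert (E2 := is_series_unique _ _ H4). rewrite E2 in E1. exact E1. }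
  replace (v * (1 + v) / (1 - v) ^ 3) with S0. exact H1.
  apply (Rmult_eq_reg_r (1 - v)); [|lra].
  replace (S0 * (1 - v)) with ((2 * v) * (v / (1 - v) ^ 2) + v * / (1 - v)) by lra. field. lra.
Qed.

Lemma ES_le (a b : nat -> R) : (forall n, Rabs (a n) <= b n) -> ex_series b -> ex_series a.
Proof. intros H1 H2. exact (@ex_series_le R_AbsRing R_CompleteNormedModule a b H1 H2). Qed.

Lemma RI_abs_le (f : R -> R) (l M : R) : (forall x, 0 <= x <= 1 -> Rabs (f x) <= M) -> is_RInt f 0 1 l -> Rabs l <= M.
Proof.
  intros H1 H2.
  assert (K := @norm_RInt_le_const R_NormedModule f 0 1 l M ltac:(lra) H1 H2).
  change (Rabs l <= (1 - 0) * M) in K. lra.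
Qed.

Lemma interchange (f : nat -> R -> R) (I : nat -> R) (F : R -> R) (L : R) (M : nat -> R) :
  (forall k, is_RInt (f k) 0 1 (I k)) ->
  (forall k u, 0 <= u <= 1 -> Rabs (f k u) <= M k) ->
  ex_series M ->
  (forall u, 0 <= u <= 1 -> is_series (fun k => f k u) (F u)) ->
  is_RInt F 0 1 L ->
  is_series I L.
Proof.
  intros HI HM HexM HF HL.
  assert (Hpart : forall N, is_RInt (fun u => sum_n (fun k => f k u) N) 0 1 (sum_n I N)).
  { induction N as [|N IH].
    - rewrite sum_O. refine (RI_ext (f 0%nat) _ _ _ _ _ (HI 0%nat)). intros; rewrite sum_O; reflexivity.
    - rewrite sum_Sn. refine (RI_ext (fun u => sum_n (fun k => f k u) N + f (S N) u) _ _ _ _ _ _).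
      + intros u _. rewrite sum_Sn. reflexivity.
      + exact (RI_plus _ _ _ _ _ _ IH (HI (S N))). }
  set (T := fun N => Series (fun k => M (S N + k)%nat)).
  assert (HT : forall N, T N = Series M - sum_n M N).
  { intros N. unfold T. rewrite (Series_incr_n M (S N)) by (auto; lia).
    rewrite sum_n_Reals. simpl. ring. }
  assert (HTlim : is_lim_seq T 0).
  { apply (is_lim_seq_ext (fun N => Series M - sum_n M N)). intros; rewrite HT; reflexivity.
    replace (Finite 0) with (Finite (Series M - Series M)) by (f_equal; ring).
    apply is_lim_seq_minus'. apply is_lim_seq_const.
    exact (Series_correct M HexM). }
  assert (Hbound : forall N, Rabs (L - sum_n I N) <= T N).
  { intros N. apply (RI_abs_le (fun u => F u - sum_n (fun k => f k u) N)).
    2:{ exact (RI_minus _ _ _ _ _ _ HL (Hpart N)). }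
    intros u Hu.
    assert (Hs := HF u Hu).
    assert (Hex : ex_series (fun k => f k u)) by (exists (F u); exact Hs).
    rewrite <- (is_series_unique _ _ Hs).
    rewrite (Series_incr_n (fun k => f k u) (S N)) by (auto; lia).
    rewrite sum_n_Reals. simpl pred.
    replace (sum_f_R0 (fun k : nat => f k u) N + Series (fun k : nat => f (S N + k)%nat u) -
       sum_f_R0 (fun k : nat => f k u) N) with (Series (fun k : nat => f (S N + k)%nat u)) by ring.
    assert (HexMt : ex_series (fun k => M (S N + k)%nat)) by (apply ex_series_incr_n; exact HexM).
    assert (Hexa : ex_series (fun k => Rabs (f (S N + k)%nat u))).
    { apply (ES_le _ (fun k => M (S N + k)%nat)); [|exact HexMt].
      intros k. rewrite Rabs_Rabsolu. apply HM, Hu. }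
    eapply Rle_trans. apply Series_Rabs, Hexa.
    apply Series_le; [|exact HexMt]. intros k. split. apply Rabs_pos. apply HM, Hu. }
  unfold is_series. change (is_lim_seq (sum_n I) L).
  apply (is_lim_seq_le_le (fun N => L - T N) _ (fun N => L + T N)).
  - intros N. assert (K := Hbound N). apply Rabs_le_between in K. lra.
  - replace (Finite L) with (Finite (L - 0)) by (f_equal; ring).
    apply is_lim_seq_minus'. apply is_lim_seq_const. exact HTlim.
  - replace (Finite L) with (Finite (L + 0)) by (f_equal; ring).
    apply is_lim_seq_plus'. apply is_lim_seq_const. exact HTlim.
Qed.


Definition fk (x a b : R) (k : nat) (u : R) : R :=
  (a * INR k + b) * (4 * INR k + 1) * ((1 - u ^ 2) / (4 * x)) ^ (2 * k).

Lemma term_int (x a b : R) (k : nat) : 0 < x ->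
  is_RInt (fk x a b k) 0 1 ((a * INR k + b) / (x ^ (2 * k) * binomR (4 * k) (2 * k))).
Proof.
  intros Hx.
  set (K := (a * INR k + b) * (4 * INR k + 1) / (4 * x) ^ (2 * k)).
  apply (RI_ext (fun u => K * (1 - u ^ 2) ^ (2 * k))).
  { intros u _. unfold fk, K. unfold Rdiv. rewrite (Rpow_mult_distr (1 - u ^ 2)), pow_inv. ring. }
  eapply RI_val. 2:{ apply RI_scal. apply wallis. }
  unfold K, Wal, binomR.
  replace (2 * (2 * k))%nat with (4 * k)%nat by lia.
  rewrite mult_INR. simpl (INR 2).
  rewrite Rpow_mult_distr.
  assert (0 < Binomial.C (4 * k) (2 * k)) by (apply C_pos; lia).
  assert (0 < x ^ (2 * k)) by (apply pow_lt; lra).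
  assert (0 < 4 ^ (2 * k)) by (apply pow_lt; lra).
  assert (0 <= INR k) by apply pos_INR.
  field. repeat split; lra.
Qed.

Definition Fpf (x a b u : R) : R :=
  (a / 4 - b / 2) * (4 * x) * (/ (4 * x - 1 + u ^ 2) + / (4 * x + 1 - u ^ 2)) +
  (b - 5 * a / 4) * (4 * x) ^ 2 * (/ (4 * x - 1 + u ^ 2) ^ 2 + / (4 * x + 1 - u ^ 2) ^ 2) +
  a * (4 * x) ^ 3 * (/ (4 * x - 1 + u ^ 2) ^ 3 + / (4 * x + 1 - u ^ 2) ^ 3).

Lemma pointwise (x a b u : R) : 1/4 < x -> 0 <= u <= 1 ->
  is_series (fun k => fk x a b k u) (Fpf x a b u).
Proof.
  intros Hx Hu.
  set (s := (1 - u ^ 2) / (4 * x)).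
  set (v := s ^ 2).
  assert (Hs : 0 <= s <= / (4 * x)).
  { unfold s. split. apply Rdiv_le_0_compat; nra. unfold Rdiv.
    rewrite <- (Rmult_1_l (/ (4 * x))) at 2. apply Rmult_le_compat_r.
    apply Rlt_le, Rinv_0_lt_compat; lra. nra. }
  assert (Hi : / (4 * x) < 1).
  { rewrite <- Rinv_1. apply Rinv_lt_contravar; lra. }
  assert (Hv : 0 <= v < 1). { unfold v. split. nra. nra. }
  assert (H := IS_plus _ _ _ _ (IS_scal _ (4 * a) _ (is_series_k2 v Hv))
                (IS_plus _ _ _ _ (IS_scal _ (a + 4 * b) _ (is_series_k1 v Hv))
                                 (IS_scal _ b _ (is_series_k0 v Hv)))).
  refine (IS_val _ _ _ _ (IS_ext _ _ _ _ H)).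
  - assert (HA : 0 < 4 * x - 1 + u ^ 2) by nra.
    assert (HB : 0 < 4 * x + 1 - u ^ 2) by nra.
    unfold Fpf. unfold v, s. field.
    replace ((4 * x) ^ 2 - (1 - u ^ 2) ^ 2) with ((4 * x - 1 + u ^ 2) * (4 * x + 1 - u ^ 2)) by ring.
    repeat split; try lra. apply Rgt_not_eq, Rmult_lt_0_compat; lra.
  - intros k. unfold fk. fold s. rewrite pow_mult. fold v. simpl. ring.
Qed.

Definition Mk (x a b : R) (k : nat) : R :=
  (Rabs a * INR k + Rabs b) * (4 * INR k + 1) * ((/ (4 * x)) ^ 2) ^ k.

Lemma dom (x a b : R) k u : 1/4 < x -> 0 <= u <= 1 -> Rabs (fk x a b k u) <= Mk x a b k.
Proof.
  intros Hx Hu. unfold fk, Mk.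
  set (s := (1 - u ^ 2) / (4 * x)).
  assert (Hs : 0 <= s <= / (4 * x)).
  { unfold s. split. apply Rdiv_le_0_compat; nra. unfold Rdiv.
    rewrite <- (Rmult_1_l (/ (4 * x))) at 2. apply Rmult_le_compat_r.
    apply Rlt_le, Rinv_0_lt_compat; lra. nra. }
  assert (0 <= INR k) by apply pos_INR.
  rewrite !Rabs_mult. rewrite <- pow_mult.
  rewrite (Rabs_right (4 * INR k + 1)) by lra.
  rewrite (Rabs_right (s ^ (2 * k))) by (apply Rle_ge, pow_le; lra).
  apply Rmult_le_compat.
  - apply Rmult_le_pos; [apply Rabs_pos | lra].
  - apply pow_le; lra.
  - apply Rmult_le_compat_r; [lra|].
    eapply Rle_trans. apply Rabs_triang. rewrite Rabs_mult, (Rabs_right (INR k)) by lra. lra.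
  - apply pow_incr. lra.
Qed.

Lemma ex_M (x a b : R) : 1/4 < x -> ex_series (Mk x a b).
Proof.
  intros Hx. set (r := (/ (4 * x)) ^ 2).
  assert (Hr : 0 <= r < 1).
  { assert (Hi : 0 < / (4 * x) < 1).
    { split. apply Rinv_0_lt_compat; lra. rewrite <- Rinv_1. apply Rinv_lt_contravar; lra. }
    unfold r. nra. }
  assert (H := IS_plus _ _ _ _ (IS_scal _ (4 * Rabs a) _ (is_series_k2 r Hr))
                (IS_plus _ _ _ _ (IS_scal _ (Rabs a + 4 * Rabs b) _ (is_series_k1 r Hr))
                                 (IS_scal _ (Rabs b) _ (is_series_k0 r Hr)))).
  eexists. refine (IS_ext _ _ _ _ H). intros k. unfold Mk. fold r. simpl. ring.
Qed.


Definition At (c u : R) : R := atan (u / c) / c.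
Definition Lg (d u : R) : R := ln ((d + u) / (d - u)) / (2 * d).

Lemma At_der c u : 0 < c -> is_derive (At c) u (/ (c * c + u ^ 2)).
Proof.
  intros Hc. unfold At. auto_derive. easy. field.
  assert (0 < c * c + u * u) by nra. split; nra.
Qed.

Lemma Lg_der d u : -d < u < d -> is_derive (Lg d) u (/ (d * d - u ^ 2)).
Proof.
  intros Hu. unfold Lg. auto_derive.
  - repeat split; try lra. apply Rmult_lt_0_compat; [lra| apply Rinv_0_lt_compat; lra].
  - field. repeat split; try lra. nra.
Qed.

Definition Kc (x a b : R) : R := (a / 4 - b / 2) * (4 * x) + (b - 5 * a / 4) * (4 * x) ^ 2 / (2 * (4 * x - 1)) + 3 * (4 * x) ^ 3 * a / (8 * (4 * x - 1) ^ 2).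
Definition Lc (x a b : R) : R := (a / 4 - b / 2) * (4 * x) + (b - 5 * a / 4) * (4 * x) ^ 2 / (2 * (4 * x + 1)) + 3 * (4 * x) ^ 3 * a / (8 * (4 * x + 1) ^ 2).
Definition PA (x a b : R) : R := (b - 5 * a / 4) * (4 * x) ^ 2 / (2 * (4 * x - 1)) + 3 * (4 * x) ^ 3 * a / (8 * (4 * x - 1) ^ 2).
Definition QA (x a b : R) : R := (4 * x) ^ 3 * a / (4 * (4 * x - 1)).
Definition PB (x a b : R) : R := (b - 5 * a / 4) * (4 * x) ^ 2 / (2 * (4 * x + 1)) + 3 * (4 * x) ^ 3 * a / (8 * (4 * x + 1) ^ 2).
Definition QB (x a b : R) : R := (4 * x) ^ 3 * a / (4 * (4 * x + 1)).

Definition Gf (x a b u : R) : R :=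
  Kc x a b * At (sqrt (4 * x - 1)) u + Lc x a b * Lg (sqrt (4 * x + 1)) u
  + PA x a b * u / (4 * x - 1 + u ^ 2) + QA x a b * u / (4 * x - 1 + u ^ 2) ^ 2
  + PB x a b * u / (4 * x + 1 - u ^ 2) + QB x a b * u / (4 * x + 1 - u ^ 2) ^ 2.

Lemma G_der (x a b u : R) : 1/4 < x -> 0 <= u <= 1 -> is_derive (Gf x a b) u (Fpf x a b u).
Proof.
  intros Hx Hu.
  set (c := sqrt (4 * x - 1)). set (d := sqrt (4 * x + 1)).
  assert (Hc : 0 < c) by (apply sqrt_lt_R0; lra).
  assert (Hd : 0 < d) by (apply sqrt_lt_R0; lra).
  assert (Hcc : c * c = 4 * x - 1) by (apply sqrt_sqrt; lra).
  assert (Hdd : d * d = 4 * x + 1) by (apply sqrt_sqrt; lra).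
  assert (Hd1 : 1 < d) by nra.
  assert (HA : 0 < 4 * x - 1 + u ^ 2) by nra.
  assert (HB : 0 < 4 * x + 1 - u ^ 2) by nra.
  assert (DA := At_der c u Hc). assert (DL := Lg_der d u ltac:(lra)).
  unfold Gf. fold c d. auto_derive.
  - repeat split; first [exists (/ (c * c + u ^ 2)); exact DA | exists (/ (d * d - u ^ 2)); exact DL | apply Rgt_not_eq; nra].
  - replace (Derive (fun x0 => At c x0) u) with (/ (c * c + u ^ 2)) by (symmetry; apply is_derive_unique; exact DA).
    replace (Derive (fun x0 => Lg d x0) u) with (/ (d * d - u ^ 2)) by (symmetry; apply is_derive_unique; exact DL).
    rewrite Hcc, Hdd.
    unfold Fpf, Kc, Lc, PA, QA, PB, QB. field. repeat split; lra.
Qed.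

Lemma RI_derive (f df : R -> R) (a b : R) :
  (forall x, Rmin a b <= x <= Rmax a b -> is_derive f x (df x)) ->
  (forall x, Rmin a b <= x <= Rmax a b -> continuous df x) ->
  is_RInt df a b (f b - f a).
Proof. intros H1 H2. exact (@is_RInt_derive R_CompleteNormedModule f df a b H1 H2). Qed.

Lemma main_gen (x a b : R) : 1/4 < x ->
  is_series (fun k => (a * INR k + b) / (x ^ (2 * k) * binomR (4 * k) (2 * k))) (Gf x a b 1 - Gf x a b 0).
Proof.
  intros Hx.
  apply (interchange (fk x a b) _ (Fpf x a b) _ (Mk x a b)).
  - intros k; apply term_int; lra.
  - intros; apply dom; auto.
  - apply ex_M; auto.
  - intros; apply pointwise; auto.
  -
    apply RI_derive; rewrite Rmin_left, Rmax_right by lra; intros u Hu.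
    + apply G_der; auto.
    + apply cont_of_der. unfold Fpf. auto_derive.
      assert (HA : 0 < 4 * x - 1 + u ^ 2) by nra.
      assert (HB : 0 < 4 * x + 1 - u ^ 2) by nra.
      repeat split. all: apply Rgt_not_eq; repeat apply Rmult_lt_0_compat; nra.
Qed.


Lemma Gval (x a b : R) : 1/4 < x ->
  Gf x a b 1 - Gf x a b 0 =
  Kc x a b * (atan (1 / sqrt (4 * x - 1)) / sqrt (4 * x - 1))
  + Lc x a b * (ln ((sqrt (4 * x + 1) + 1) / (sqrt (4 * x + 1) - 1)) / (2 * sqrt (4 * x + 1)))
  + PA x a b / (4 * x) + QA x a b / (4 * x) ^ 2 + PB x a b / (4 * x) + QB x a b / (4 * x) ^ 2.
Proof.
  intros Hx. unfold Gf, At, Lg.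
  set (c := sqrt (4 * x - 1)). set (d := sqrt (4 * x + 1)).
  assert (Hc : 0 < c) by (apply sqrt_lt_R0; lra).
  assert (Hd : 0 < d) by (apply sqrt_lt_R0; lra).
  assert (Hdd : d * d = 4 * x + 1) by (apply sqrt_sqrt; lra).
  assert (Hd1 : 1 < d) by nra.
  replace (0 / c) with 0 by (field; lra). rewrite atan_0.
  replace ((d + 0) / (d - 0)) with 1 by (field; lra). rewrite ln_1.
  replace (d + 1) with (d + 1) by reflexivity.
  field. repeat split; lra.
Qed.

Lemma part1 (x : R) : 1/4 < x ->
  is_series (fun k : nat =>
        (2 * (4 * x + 1) * INR k - 2 * x + 1) / (x ^ (2 * k) * binomR (4 * k) (2 * k)))
       (8 * x ^ 2 / (4 * x - 1) ^ 2 *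
          (3 / sqrt (4 * x - 1) * arccot (sqrt (4 * x - 1)) - 4 * x + 4)).
Proof.
  intros Hx.
  assert (H := main_gen x (2 * (4 * x + 1)) (- 2 * x + 1) Hx).
  refine (IS_val _ _ _ _ (IS_ext _ _ _ _ H)).
  2:{ intros k. f_equal. ring. }
  rewrite Gval by lra. unfold arccot, Kc, Lc, PA, QA, PB, QB.
  assert (Hc : 0 < sqrt (4 * x - 1)) by (apply sqrt_lt_R0; lra).
  assert (Hd : 0 < sqrt (4 * x + 1)) by (apply sqrt_lt_R0; lra).
  field. repeat split; lra.
Qed.

Lemma part2 (x : R) : 1/4 < x ->
  is_series (fun k : nat =>
        (2 * (4 * x - 1) * INR k - 2 * x - 1) / (x ^ (2 * k) * binomR (4 * k) (2 * k)))
       (8 * x ^ 2 / (4 * x + 1) ^ 2 *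
          (3 * Rfun (4 * x + 1) / (4 * x + 1) - 4 * x - 4)).
Proof.
  intros Hx.
  assert (H := main_gen x (2 * (4 * x - 1)) (- 2 * x - 1) Hx).
  refine (IS_val _ _ _ _ (IS_ext _ _ _ _ H)).
  2:{ intros k. f_equal. ring. }
  rewrite Gval by lra. unfold Rfun, Kc, Lc, PA, QA, PB, QB.
  destruct (Rlt_dec 1 (4 * x + 1)) as [_|Hn]; [|lra].
  set (c := sqrt (4 * x - 1)). set (d := sqrt (4 * x + 1)).
  assert (Hc : 0 < c) by (apply sqrt_lt_R0; lra).
  assert (Hd : 0 < d) by (apply sqrt_lt_R0; lra).
  assert (Hdd : d * d = 4 * x + 1) by (apply sqrt_sqrt; lra).
  set (T := atan (1 / c)). set (Lo := ln ((d + 1) / (d - 1))).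
  clearbody c d T Lo.
  assert (Ex : x = (d * d - 1) / 4) by lra. subst x.
  field. repeat split; nra.
Qed.

Lemma Cnz k : binomR (4 * k) (2 * k) <> 0.
Proof. apply Rgt_not_eq, C_pos; lia. Qed.

Lemma atan_inv_sqrt3 : atan (1 / sqrt 3) = PI / 6.
Proof. rewrite <- tan_PI6. apply atan_tan. assert (H := PI_RGT_0). lra. Qed.
Lemma atan_sqrt3 : atan (sqrt 3) = PI / 3.
Proof. rewrite <- tan_PI3. apply atan_tan. assert (H := PI_RGT_0). lra. Qed.

Lemma case3 : is_series (fun k : nat => (10 * INR k - 1) / binomR (4 * k) (2 * k))
       (4 * sqrt 3 / 27 * PI).
Proof.
  assert (H := part1 1 ltac:(lra)).
  refine (IS_val _ _ _ _ (IS_ext _ _ _ _ H)).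
  2:{ intros k. rewrite pow1, Rmult_1_l. f_equal. ring. }
  replace (4 * 1 - 1) with 3 by ring. unfold arccot. rewrite atan_inv_sqrt3.
  assert (Hs : 0 < sqrt 3) by (apply sqrt_lt_R0; lra).
  assert (Hss : sqrt 3 * sqrt 3 = 3) by (apply sqrt_sqrt; lra).
  replace (3 / sqrt 3) with (sqrt 3) by (field_simplify; [rewrite <- Hss at 2; field|]; lra).
  field.
Qed.

Lemma case4 : is_series (fun k : nat => INR k * 4 ^ k / binomR (4 * k) (2 * k))
       ((3 * PI + 8) / 12).
Proof.
  assert (H := IS_scal _ (/ 6) _ (part1 (1/2) ltac:(lra))).
  refine (IS_val _ _ _ _ (IS_ext _ _ _ _ H)).
  2:{ intros k. rewrite pow_mult. replace ((1/2) ^ 2) with (/ 4) by field. rewrite pow_inv.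
      assert (0 < 4 ^ k) by (apply pow_lt; lra). assert (Hc := Cnz k).
      field. split; lra. }
  replace (4 * (1/2) - 1) with 1 by field. rewrite sqrt_1. unfold arccot.
  replace (1 / 1) with 1 by field. rewrite atan_1. field.
Qed.

Lemma case5 : is_series (fun k : nat => (14 * INR k + 1) * 9 ^ k / binomR (4 * k) (2 * k))
       (24 * PI * sqrt 3 + 64).
Proof.
  assert (H := IS_scal _ 3 _ (part1 (1/3) ltac:(lra))).
  refine (IS_val _ _ _ _ (IS_ext _ _ _ _ H)).
  2:{ intros k. rewrite pow_mult. replace ((1/3) ^ 2) with (/ 9) by field. rewrite pow_inv.
      assert (0 < 9 ^ k) by (apply pow_lt; lra). assert (Hc := Cnz k).
      field. split; lra. }
  replace (4 * (1/3) - 1) with (/ 3) by field. rewrite sqrt_inv. unfold arccot.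
  assert (Hs : 0 < sqrt 3) by (apply sqrt_lt_R0; lra).
  replace (1 / / sqrt 3) with (sqrt 3) by (field; lra). rewrite atan_sqrt3.
  field. lra.
Qed.

Lemma case6 : is_series (fun k : nat => (22 * INR k - 1) * 9 ^ k / (4 ^ k * binomR (4 * k) (2 * k)))
       (32 / 25 * (4 + 27 / sqrt 15 * atan (sqrt (3 / 5)))).
Proof.
  assert (H := IS_scal _ 3 _ (part1 (2/3) ltac:(lra))).
  refine (IS_val _ _ _ _ (IS_ext _ _ _ _ H)).
  2:{ intros k. rewrite pow_mult. replace ((2/3) ^ 2) with (4 * / 9) by field.
      rewrite Rpow_mult_distr, pow_inv.
      assert (0 < 9 ^ k) by (apply pow_lt; lra). assert (0 < 4 ^ k) by (apply pow_lt; lra). assert (Hc := Cnz k).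
      field. repeat split; lra. }
  replace (4 * (2/3) - 1) with (5 / 3) by field. unfold arccot.
  assert (Hq : 0 < sqrt (5 / 3)) by (apply sqrt_lt_R0; lra).
  replace (3 / 5) with (/ (5 / 3)) by field. rewrite sqrt_inv.
  replace (1 / sqrt (5 / 3)) with (/ sqrt (5 / 3)) by (field; lra).
  replace 15 with (3 * 3 * (5 / 3)) by field.
  rewrite sqrt_mult by lra. rewrite sqrt_square by lra.
  field. lra.
Qed.

Lemma case7 : is_series (fun k : nat => (14 * INR k - 5) / (4 ^ k * binomR (4 * k) (2 * k)))
       (16 / 81 * (ln 2 - 24)).
Proof.
  assert (H := part2 2 ltac:(lra)).
  refine (IS_val _ _ _ _ (IS_ext _ _ _ _ H)).
  2:{ intros k. rewrite pow_mult. replace (2 ^ 2) with 4 by ring. f_equal. ring. }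
  replace (4 * 2 + 1) with 9 by ring. unfold Rfun.
  destruct (Rlt_dec 1 9) as [_|Hn]; [|lra].
  replace 9 with (3 * 3) by ring. rewrite sqrt_square by lra.
  replace ((3 + 1) / (3 - 1)) with 2 by field.
  field.
Qed.

Theorem theorem1p2 :
  (forall x : R, 1 / 4 < x ->
     is_series (fun k : nat =>
        (2 * (4 * x + 1) * INR k - 2 * x + 1) / (x ^ (2 * k) * binomR (4 * k) (2 * k)))
       (8 * x ^ 2 / (4 * x - 1) ^ 2 *
          (3 / sqrt (4 * x - 1) * arccot (sqrt (4 * x - 1)) - 4 * x + 4))
     /\
     is_series (fun k : nat =>
        (2 * (4 * x - 1) * INR k - 2 * x - 1) / (x ^ (2 * k) * binomR (4 * k) (2 * k)))
       (8 * x ^ 2 / (4 * x + 1) ^ 2 *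
          (3 * Rfun (4 * x + 1) / (4 * x + 1) - 4 * x - 4)))
  /\ is_series (fun k : nat => (10 * INR k - 1) / binomR (4 * k) (2 * k))
       (4 * sqrt 3 / 27 * PI)
  /\ is_series (fun k : nat => INR k * 4 ^ k / binomR (4 * k) (2 * k))
       ((3 * PI + 8) / 12)
  /\ is_series (fun k : nat => (14 * INR k + 1) * 9 ^ k / binomR (4 * k) (2 * k))
       (24 * PI * sqrt 3 + 64)
  /\ is_series (fun k : nat => (22 * INR k - 1) * 9 ^ k / (4 ^ k * binomR (4 * k) (2 * k)))
       (32 / 25 * (4 + 27 / sqrt 15 * atan (sqrt (3 / 5))))
  /\ is_series (fun k : nat => (14 * INR k - 5) / (4 ^ k * binomR (4 * k) (2 * k)))
       (16 / 81 * (ln 2 - 24)).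
Proof.
  split. { intros x Hx. split; [apply part1 | apply part2]; exact Hx. }
  split. exact case3. split. exact case4. split. exact case5. split. exact case6. exact case7.
Qed.
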